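(* Let $k$ be an infinite Brauer field of characteristic $0$, let $d\ge 1$, and assume that $\Sigma^*((d))$ holds. There is a constant $C(d)$ such that for every finite-dimensional $k$-vector space $V$ and every homogeneous polynomial $f$ of degree $d$ on $V$ that is diagonal of rank $>C(d)$, there is a three-dimensional subspace $E$ of $V$ such that $f|_E$ is good.
   Context: A field $k$ is a Brauer field if for every $d\ge 1$ there is $N_k(d)$ such that every equation $a_1x_1^d+\cdots+a_nx_n^d=0$ with $n>N_k(d)$, $a_i\in k$, has a non-trivial solution in $k^n$. A homogeneous polynomial $f$ of degree $d$ on $V$ is diagonal of rank $r$ if there are linear coordinates $x_1,\ldots,x_n$ on $V$ with $f=a_1x_1^d+\cdots+a_rx_r^d$ and $a_1,\ldots,a_r\in k$ all nonzero. A homogeneous polynomial $h$ of degree $d$ on a $3$-dimensional space is good if $h=xy^{d-1}+ay^d+bz^d$ for some coordinates $x,y,z$, some $a\in k$, $b\in k^{\times}$. Multi-degrees are tuples $(e_1\ge\cdots\ge e_s\ge 1)$ compared lexicographically (a proper initial segment being smaller). Strength: for a homogeneous $f$ of degree $d>0$, $\operatorname{str}(f)$ is the minimal $s$ with $f=\sum_{t=1}^s g_th_t$, $g_t,h_t$ homogeneous over $k$ of degrees $<d$; the strength of a tuple is the minimal strength of a nontrivial $k$-linear combination of its members of equal degree. $\Sigma(\underline{e})$ is the statement: there is a constant $C$ such that for every finite-dimensional $k$-vector space $U$ and every tuple $\underline{g}$ of homogeneous polynomials on $U$ of multi-degree $\underline{e}$ with $\operatorname{str}(\underline{g})>C$,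 the $k$-points of the common zero locus $Z(\underline{g})$ are Zariski dense in $Z(\underline{g})$. $\Sigma^*((d))$ is the statement that $\Sigma(\underline{e})$ holds for every multi-degree $\underline{e}<(d)$, i.e. every multi-degree with first entry $<d$. *)

(* Defs.v *)
From HB Require Import structures.
From mathcomp Require Import all_boot all_order all_algebra.
From mathcomp Require Import mpoly.
Set Implicit Arguments. Unset Strict Implicit. Unset Printing Implicit Defensive.
Import Order.TTheory GRing.Theory.
Local Open Scope ring_scope.

(* A finite-dimensional k-vector space V is modelled as k^n (a choice of
   linear coordinates), polynomial functions on V as {mpoly k[n]}. *)

Section Defs.
Variable k : fieldType.

(* p is homogeneous of degree d (the zero polynomial is homogeneous of every degree) *)
Definition homogeneous (n d : nat) (p : {mpoly k[n]}) : Prop :=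
  p \is @ishomog1 n k d mdeg.

Definition linforms (n m : nat) (M : 'M[k]_(n, m)) : n.-tuple {mpoly k[m]} :=
  [tuple \sum_(j < m) M i j *: 'X_j | i < n].

Definition pullback (n m : nat) (M : 'M[k]_(n, m)) (p : {mpoly k[n]}) : {mpoly k[m]} :=
  comp_mpoly (linforms M) p.

Definition brauer_field : Prop :=
  forall d : nat, (1 <= d)%N -> exists N : nat,
    forall (n : nat) (a : 'I_n -> k), (N < n)%N ->
      exists x : 'I_n -> k, (exists i, x i != 0) /\ \sum_(i < n) a i * x i ^+ d = 0.

(* f is diagonal of rank r: in some linear coordinates x (given by an
   invertible matrix A, x_i = sum_j A i j X_j), f = a_1 x_1^d + ... + a_r x_r^d
   with all a_i nonzero. *)
Definition diagonal_of_rank (n d r : nat) (f : {mpoly k[n]}) : Prop :=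
  exists (A : 'M[k]_n) (a : 'I_n -> k),
    A \in unitmx /\ (r <= n)%N /\
    (forall i : 'I_n, (i < r)%N -> a i != 0) /\
    f = pullback A (\sum_(i < n | (i < r)%N) a i *: 'X_i ^+ d).

Definition good (d : nat) (h : {mpoly k[3]}) : Prop :=
  exists (P : 'M[k]_3) (a b : k),
    P \in unitmx /\ b != 0 /\
    h = pullback P ('X_0 * 'X_1 ^+ d.-1 + a *: 'X_1 ^+ d + b *: 'X_2 ^+ d).

Definition strength_le (n d s : nat) (f : {mpoly k[n]}) : Prop :=
  exists (deg : 'I_s -> nat) (g h : 'I_s -> {mpoly k[n]}),
    (forall t, 1 <= deg t < d)%N /\
    (forall t, homogeneous (deg t) (g t)) /\
    (forall t, homogeneous (d - deg t) (h t)) /\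
    f = \sum_(t < s) g t * h t.

Definition tuple_strength_gt (n : nat) (e : seq nat) (g : seq {mpoly k[n]}) (C : nat) : Prop :=
  forall (deg : nat) (c : 'I_(size e) -> k),
    (forall i : 'I_(size e), c i != 0 -> nth 0%N e i = deg) ->
    (exists i, c i != 0) ->
    ~ strength_le deg C (\sum_(i < size e) c i *: nth 0 g i).

Definition multidegree (e : seq nat) : Prop :=
  sorted geq e /\ all (fun x => 0 < x)%N e.

(* The k-points of Z(g) are Zariski dense in Z(g): every polynomial over k
   vanishing on Z(g)(k) vanishes on Z(g)(K) for every field extension K/k. *)
Definition kpoints_dense (n : nat) (g : seq {mpoly k[n]}) : Prop :=
  forall h : {mpoly k[n]},
    (forall x : 'I_n -> k, (forall p, p \in g -> p.@[x] = 0) -> h.@[x] = 0) ->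
    forall (K : fieldType) (phi : {rmorphism k -> K}) (x : 'I_n -> K),
      (forall p, p \in g -> (map_mpoly phi p).@[x] = 0) ->
      (map_mpoly phi h).@[x] = 0.

Definition Sigma (e : seq nat) : Prop :=
  exists C : nat, forall (n : nat) (g : seq {mpoly k[n]}),
    size g = size e ->
    (forall i, (i < size e)%N -> homogeneous (nth 0%N e i) (nth 0 g i)) ->
    tuple_strength_gt e g C ->
    kpoints_dense g.

(* lexicographic comparison e < (d) (a proper initial segment is smaller) *)
Definition multideg_lt_single (e : seq nat) (d : nat) : Prop :=
  match e with [::] => True | e1 :: _ => (e1 < d)%N end.

Definition Sigma_star (d : nat) : Prop :=
  forall e : seq nat, multidegree e -> multideg_lt_single e d -> Sigma e.

End Defs.

(* Main.v *)
From HB Require Import structures.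
Require Import Defs.
From mathcomp Require Import all_boot all_order all_algebra.
From mathcomp Require Import mpoly.
From mathcomp Require Import ring zify.
Set Implicit Arguments. Unset Strict Implicit. Unset Printing Implicit Defensive.
Import Order.TTheory GRing.Theory.
Local Open Scope ring_scope.

Section Meas.
Variable k : fieldType.
Variable d : nat.

Definition trip := (k * k * k)%type.
Definition mom (j : nat) (t : seq trip) : k :=
  \sum_(x <- t) x.1.1 * x.1.2 ^+ d * x.2 ^+ j.
Definition coefs (t : seq trip) : seq k := map (fun x => x.1.1) t.
Definition scalet (c : k) (x : trip) : trip := (x.1.1, c * x.1.2, c * x.2).
Definition shiftt (s : k) (x : trip) : trip := (x.1.1, x.1.2, x.2 + s).

Lemma mom_cat j t1 t2 : mom j (t1 ++ t2) = mom j t1 + mom j t2.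
Proof. by rewrite /mom big_cat. Qed.

Lemma mom_nil j : mom j [::] = 0.
Proof. by rewrite /mom big_nil. Qed.

Lemma mom_flatten j ts : mom j (flatten ts) = \sum_(t <- ts) mom j t.
Proof.
elim: ts => [|t ts IH]; first by rewrite big_nil mom_nil.
by rewrite /= mom_cat IH big_cons.
Qed.

Lemma mom_scale j c t : mom j (map (scalet c) t) = c ^+ (d + j) * mom j t.
Proof.
rewrite /mom big_map mulr_sumr; apply: eq_bigr => x _ /=.
by rewrite !exprMn exprD; ring.
Qed.

Lemma mom_shift j s t :
  mom j (map (shiftt s) t) = \sum_(i < j.+1) (mom (j - i) t * s ^+ i) *+ 'C(j, i).
Proof.
rewrite /mom big_map.
under eq_bigr => x _ do rewrite /= exprDn mulr_sumr.
rewrite exchange_big /=; apply: eq_bigr => i _.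
rewrite mulr_suml -sumrMnl; apply: eq_bigr => x _.
by rewrite mulrnAr mulrA.
Qed.

Lemma mom_shift_lt m j s t : (forall l, (l < m)%N -> mom l t = 0) ->
  (j < m)%N -> mom j (map (shiftt s) t) = 0.
Proof.
move=> H jm; rewrite mom_shift big1 // => i _.
by rewrite H ?mul0r ?mul0rn //; apply: leq_ltn_trans (leq_subr _ _) jm.
Qed.

Lemma mom_shift_eq m s t : (forall l, (l < m)%N -> mom l t = 0) ->
  mom m (map (shiftt s) t) = mom m t.
Proof.
move=> H; rewrite mom_shift big_ord_recl /= subn0 expr0 mulr1 bin0 mulr1n.
rewrite big1 ?addr0 // => i _.
by rewrite H ?mul0r ?mul0rn //; have := ltn_ord i; rewrite /bump /=; lia.
Qed.

Lemma mom_shift_succ m s t : (forall l, (l < m)%N -> mom l t = 0) ->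
  mom m.+1 (map (shiftt s) t) = mom m.+1 t + s * (m.+1)%:R * mom m t.
Proof.
move=> H; rewrite mom_shift big_ord_recl big_ord_recl /= subn0 expr0 mulr1 bin0 mulr1n.
rewrite big1 ?addr0.
  by rewrite /bump /= subSS subn0 expr1 bin1 -mulr_natr; congr (_ + _); ring.
move=> i _; rewrite H ?mul0r ?mul0rn //; have := ltn_ord i; rewrite /bump /=; lia.
Qed.


Lemma coefs_ss s c t : coefs (map (shiftt s) (map (scalet c) t)) = coefs t.
Proof. by rewrite /coefs -!map_comp. Qed.

Definition Qm (m B : nat) : Prop := forall a : seq k, size a = B ->
  all (fun x => x != 0) a -> exists t, coefs t = a /\
    (forall j, (j < m)%N -> mom j t = 0) /\ mom m t != 0.

Lemma Q0 : Qm 0 1.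
Proof.
move=> a; case: a => [|a0 [|? ?]] //= _ /andP[a0n _]; exists [:: (a0, 1, 0)]; split => //.
split => //; rewrite /mom big_cons big_nil /= expr1n expr0 !mulr1 addr0 //.
Qed.

Fixpoint chunks (B L : nat) (a : seq k) : seq (seq k) :=
  if L is L'.+1 then take B a :: chunks B L' (drop B a) else [::].

Lemma size_chunks B L a : size (chunks B L a) = L.
Proof. by elim: L a => [|L IH] a //=; rewrite IH. Qed.

Lemma flatten_chunks B L a : size a = (L * B)%N -> flatten (chunks B L a) = a.
Proof.
elim: L a => [|L IH] a /= sa; first by case: a sa.
by rewrite IH ?cat_take_drop // size_drop sa mulSn addKn.
Qed.

Lemma mem_chunks B L a c : size a = (L * B)%N -> all (fun x => x != 0) a ->
  c \in chunks B L a -> size c = B /\ all (fun x => x != 0) c.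
Proof.
elim: L a => [|L IH] a //= sa alla; rewrite inE => /orP[/eqP->|].
  split; first by rewrite size_take sa mulSn; case: ifP => //; lia.
  by apply/allP => x /mem_take /(allP alla).
apply: IH; first by rewrite size_drop sa mulSn addKn.
by apply/allP => x /mem_drop /(allP alla).
Qed.

Lemma Qstep m B N :
  (forall a : 'I_N.+1 -> k, exists x : 'I_N.+1 -> k,
      (exists i, x i != 0) /\ \sum_(i < N.+1) a i * x i ^+ (d + m) = 0) ->
  (m.+1)%:R != 0 :> k ->
  Qm m B -> Qm m.+1 (N.+1 * B).
Proof.
move=> Hb hm HQ a sa alla.
set L := N.+1.
pose cs := chunks B L a.
have size_cs : size cs = L by rewrite size_chunks.
have flat : flatten cs = a by rewrite flatten_chunks.
have : forall l : 'I_L, exists t, coefs t = nth [::] cs l /\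
    (forall j, (j < m)%N -> mom j t = 0) /\ mom m t != 0.
  move=> l; have [] := @mem_chunks B L a (nth [::] cs l) sa alla.
    by rewrite mem_nth // size_cs.
  by move=> /HQ H /H.
case/fin_all_exists => T HT.
pose c l := mom m (T l).
have [x [[l0 xl0] hx]] := Hb c.
pose sh (l : 'I_L) (s : k) := if l == l0 then s else 0.
pose T2 (l : 'I_L) s := map (shiftt (sh l s)) (map (scalet (x l)) (T l)).
pose tt s := flatten [seq T2 (inord l) s | l <- iota 0 L].
have momtt j s : mom j (tt s) = \sum_(l < L) mom j (T2 l s).
  rewrite mom_flatten big_map.
  have -> : iota 0 L = index_iota 0 L by rewrite /index_iota subn0.
  by rewrite big_mkord; apply: eq_bigr => l _; rewrite inord_val.
have Hsc l : forall j, (j < m)%N -> mom j (map (scalet (x l)) (T l)) = 0.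
  by move=> j jm; rewrite mom_scale (proj1 (proj2 (HT l))) ?mulr0.
have coefstt s : coefs (tt s) = a.
  rewrite /coefs /tt map_flatten -map_comp -flat.
  rewrite -[in RHS](mkseq_nth [::] cs) size_cs /mkseq; congr flatten.
  apply/eq_in_map => l; rewrite mem_iota add0n => /andP[_ lL] /=.
  rewrite /T2 /=; have := coefs_ss (sh (inord l) s) (x (inord l)) (T (inord l)); rewrite /coefs => ->.
  by have := proj1 (HT (inord l)); rewrite /coefs inordK // => ->.
pose A := \sum_(l < L) mom m.+1 (map (scalet (x l)) (T l)).
pose K := (m.+1)%:R * (x l0 ^+ (d + m) * c l0).
have Kn0 : K != 0.
  by rewrite /K !mulf_neq0 ?expf_neq0 // (proj2 (proj2 (HT l0))).
have momS s : mom m.+1 (tt s) = A + s * K.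
  rewrite momtt /A /T2.
  under eq_bigr => l _ do rewrite (mom_shift_succ _ (Hsc l)).
  rewrite big_split /=; congr (_ + _).
  rewrite (bigD1 l0) //= big1 => [|l lne]; last by rewrite /sh (negbTE lne) !mul0r.
  by rewrite /sh eqxx addr0 /K /c mom_scale; ring.
exists (tt (if A == 0 then 1 else 0)); split; first exact: coefstt.
split.
  move=> j; rewrite ltnS leq_eqVlt => /orP[/eqP->|jm].
    rewrite momtt; under eq_bigr => l _ do rewrite /T2 (mom_shift_eq _ (Hsc l)) mom_scale.
    by rewrite -[RHS]hx; apply: eq_bigr => l _; rewrite mulrC.
  by rewrite momtt big1 // => l _; rewrite /T2 (mom_shift_lt _ (Hsc l)).
rewrite momS; case: (A =P 0) => [HA|/eqP An0]; first by rewrite HA add0r mul1r.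
by rewrite mul0r addr0.
Qed.

End Meas.
Section Poly.
Variable k : fieldType.

Definition lin (n m : nat) (M : 'M[k]_(n, m)) (i : 'I_n) : {mpoly k[m]} :=
  \sum_(j < m) M i j *: 'X_j.

Lemma pb_X n m (M : 'M[k]_(n, m)) i : pullback M 'X_i = lin M i.
Proof. by rewrite /pullback comp_mpolyXU /linforms -tnth_nth tnth_mktuple. Qed.

Lemma pb_lin n m p (A : 'M[k]_(n, m)) (E : 'M[k]_(m, p)) i :
  pullback E (lin A i) = lin (A *m E) i.
Proof.
rewrite /lin /pullback raddf_sum /=.
under eq_bigr => j _ do rewrite comp_mpolyZ -/(pullback E _) pb_X /lin scaler_sumr.
rewrite exchange_big /=; apply: eq_bigr => l _.
by rewrite mxE scaler_suml; apply: eq_bigr => j _; rewrite scalerA.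
Qed.

Lemma pb_diag n m (M : 'M[k]_(n, m)) (P : pred 'I_n) (a : 'I_n -> k) (d : nat)
  (F : 'I_n -> {mpoly k[n]}) :
  pullback M (\sum_(i < n | P i) a i *: F i ^+ d) =
  \sum_(i < n | P i) a i *: (pullback M (F i)) ^+ d.
Proof.
rewrite /pullback raddf_sum /=; apply: eq_bigr => i _.
by rewrite comp_mpolyZ rmorphXn.
Qed.


Definition E0 (n : nat) (i0 : 'I_n) (U P Q : 'I_n -> k) : 'M[k]_(n, 3) :=
  \matrix_(i < n, l < 3)
    (if val l == 0%N then U i * P i else if val l == 1%N then U i * Q i
     else (i == i0)%:R).

Lemma lin_E0 n i0 (U P Q : 'I_n -> k) i :
  lin (E0 i0 U P Q) i =
  U i *: (P i *: 'X_0 + Q i *: 'X_1) + (i == i0)%:R *: 'X_2.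
Proof.
rewrite /lin !big_ord_recl big_ord0 /= !mxE /= addr0 scalerDr !scalerA addrA.
by congr (_ + _ + _ *: _).
Qed.

Lemma expand n r d (a : 'I_n -> k) (i0 : 'I_n) (U P Q : 'I_n -> k) :
  (0 < d)%N -> (i0 < r)%N -> U i0 = 0 ->
  \sum_(i < n | (i < r)%N) a i *: (lin (E0 i0 U P Q) i) ^+ d =
  \sum_(j < d.+1) ((\sum_(i < n | (i < r)%N) a i * U i ^+ d * P i ^+ (d - j) * Q i ^+ j)
      *+ 'C(d, j)) *: ('X_0 ^+ (d - j) * 'X_1 ^+ j)
  + a i0 *: 'X_2 ^+ d.
Proof.
move=> d0 i0r Ui0.
have pt i : a i *: (lin (E0 i0 U P Q) i) ^+ d =
   a i *: (U i *: (P i *: 'X_0 + Q i *: 'X_1)) ^+ d +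
   (if i == i0 then a i *: 'X_2 ^+ d else 0).
  rewrite lin_E0; case: eqP => [->|_]; last by rewrite scale0r !addr0.
  by rewrite Ui0 !scale0r add0r scale1r expr0n -(prednK d0) /= scaler0 add0r.
under eq_bigr => i _ do rewrite pt.
rewrite big_split /=; congr (_ + _); last first.
  rewrite (bigD1 i0) //= eqxx big1 ?addr0 // => i /andP[_ /negbTE ->] //.
under eq_bigr => i _ do rewrite exprZn exprDn scalerA scaler_sumr.
rewrite exchange_big /=; apply: eq_bigr => j _.
rewrite -scalerMnl scaler_suml -sumrMnl; apply: eq_bigr => i _.
rewrite -!scalerMnr; apply: (congr1 (fun x => x *+ _)).
by rewrite !exprZn -scalerAl -scalerAr !scalerA; congr (_ *: _); ring.
Qed.


Lemma pb1 n (h : {mpoly k[n]}) : pullback 1%:M h = h.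
Proof.
rewrite /pullback; have -> : linforms (1%:M : 'M[k]_n) = [tuple 'X_i | i < n].
  apply: eq_from_tnth => i; rewrite !tnth_mktuple (bigD1 i) //= mxE eqxx scale1r.
  by rewrite big1 ?addr0 // => j /negbTE; rewrite mxE eq_sym => ->; rewrite scale0r.
exact: comp_mpoly_id.
Qed.

Lemma rank_E0 n (i0 : 'I_n) (U P Q : 'I_n -> k) : U i0 = 0 ->
  (forall v0 v1, (forall i, U i * (v0 * P i + v1 * Q i) = 0) -> v0 = 0 /\ v1 = 0) ->
  \rank (E0 i0 U P Q) = 3%N.
Proof.
move=> Ui0 Hker; rewrite -mxrank_tr; apply/eqP; apply: inj_row_free => v hv.
have e i : v 0 0 * (U i * P i) + v 0 1 * (U i * Q i) + v 0 2 * (i == i0)%:R = 0.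
  have := congr1 (fun M : 'M[k]_(1, n) => M 0 i) hv; rewrite !mxE !big_ord_recl big_ord0 !mxE /=.
  move=> h; rewrite -[RHS]h addr0 addrA; congr (v 0 _ * _ + v 0 _ * _ + v 0 _ * _); exact: val_inj.
have v2 : v 0 2 = 0 by have := e i0; rewrite Ui0 !mul0r !mulr0 !add0r eqxx mulr1.
have [v0 v1] : v 0 0 = 0 /\ v 0 1 = 0.
  apply: Hker => i; have := e i; rewrite v2 mul0r addr0 => <-; ring.
apply/rowP => l; rewrite !mxE; case: l => [[|[|[|l]]] lt] //.
- by rewrite -[RHS]v0; congr (v 0 _); apply: val_inj.
- by rewrite -[RHS]v1; congr (v 0 _); apply: val_inj.
- by rewrite -[RHS]v2; congr (v 0 _); apply: val_inj.
Qed.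

Lemma finish n r d (A : 'M[k]_n) (a : 'I_n -> k) (i0 : 'I_n) (U P Q : 'I_n -> k)
  (f : {mpoly k[n]}) :
  (0 < d)%N -> (i0 < r)%N -> a i0 != 0 -> U i0 = 0 -> A \in unitmx ->
  f = pullback A (\sum_(i < n | (i < r)%N) a i *: 'X_i ^+ d) ->
  (forall j, (j < d.-1)%N ->
     \sum_(i < n | (i < r)%N) a i * U i ^+ d * P i ^+ (d - j) * Q i ^+ j = 0) ->
  (\sum_(i < n | (i < r)%N) a i * U i ^+ d * P i ^+ (d - d.-1) * Q i ^+ d.-1) *+ d = 1 ->
  (forall v0 v1, (forall i, U i * (v0 * P i + v1 * Q i) = 0) -> v0 = 0 /\ v1 = 0) ->
  exists E : 'M[k]_(n, 3), \rank E = 3%N /\ good d (pullback E f).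
Proof.
move=> d0 i0r ai0 Ui0 Au fE HN1 HN2 Hker.
pose E := invmx A *m E0 i0 U P Q.
have AE : A *m E = E0 i0 U P Q by rewrite mulmxA mulmxV // mul1mx.
exists E; split.
  apply/eqP; rewrite eqn_leq rank_leq_col /=.
  by have := mxrankM_maxr A E; rewrite AE rank_E0.
exists 1%:M, (\sum_(i < n | (i < r)%N) a i * U i ^+ d * P i ^+ (d - d) * Q i ^+ d), (a i0).
split; first exact: unitmx1.
split => //.
rewrite pb1 fE (pb_diag _ _ _ _ (fun i => 'X_i)).
under eq_bigr => i _ do rewrite pb_X.
rewrite pb_diag; under eq_bigr => i _ do rewrite pb_lin AE.
rewrite expand //; congr (_ + _).
rewrite big_ord_recr /= binn mulr1n subnn expr0 mul1r; congr (_ + _).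
case: d d0 HN1 HN2 {fE} => [|d'] // _ HN1 HN2.
rewrite big_ord_recr /= big1 => [|j _]; last first.
  by rewrite HN1 ?mul0rn ?scale0r //= ltn_ord.
by rewrite add0r binSn HN2 scale1r subSnn expr1.
Qed.

End Poly.

Lemma char_nz (k : fieldType) : [pchar k] =i pred0 -> forall m : nat, (m.+1)%:R != 0 :> k.
Proof. by move/pcharf0P => h m; rewrite h. Qed.

Lemma Qex (k : fieldType) d : (0 < d)%N -> brauer_field k -> [pchar k] =i pred0 ->
  forall m, exists B, Qm k d m B.
Proof.
move=> d0 kb kc; elim=> [|m [B HB]]; first by exists 1%N; exact: Q0.
have [N HN] := kb (d + m)%N (leq_trans d0 (leq_addr _ _)).
exists (N.+1 * B)%N; apply: Qstep => //; last exact: char_nz.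
by move=> a; apply: HN.
Qed.

Unset Implicit Arguments.
Set Strict Implicit.

Theorem proposition5p1 (k : fieldType)
    (k_infinite : forall s : seq k, exists x : k, x \notin s)
    (k_char0 : [pchar k] =i pred0)
    (k_brauer : brauer_field k)
    (d : nat) (hd : (1 <= d)%N)
    (hSigma : Sigma_star k d) :
  exists C : nat, forall (n : nat) (f : {mpoly k[n]}),
    homogeneous d f ->
    (exists r : nat, (C < r)%N /\ diagonal_of_rank d r f) ->
    exists E : 'M[k]_(n, 3), \rank E = 3%N /\ good d (pullback E f).
Proof.
pose m0 := if d == 1%N then 1%N else d.-1.
have [B HB] := Qex hd k_brauer k_char0 m0.
exists B => n f _ [r [Br [A [a [Au [rn [anz fE]]]]]]].
have i0n : (r.-1 < n)%N by lia.
pose i0 := Ordinal i0n.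
have Bn : (B < n)%N by lia.
pose alist := take B [seq a i | i <- enum 'I_n].
have nth_alist (i : 'I_n) : (i < B)%N -> nth 0 alist i = a i.
  move=> iB; rewrite nth_take // (nth_map i0) ?size_enum_ord //.
  by congr a; apply: val_inj; rewrite /= nth_enum_ord.
have size_alist : size alist = B.
  by rewrite size_take size_map size_enum_ord Bn.
have all_alist : all (fun x => x != 0) alist.
  apply/(all_nthP 0) => i; rewrite size_alist => iB.
  have iN : (i < n)%N by lia.
  rewrite (nth_alist (Ordinal iN)) //; apply: anz => /=; lia.
have [t [ct [tz tnz]]] := HB alist size_alist all_alist.
have size_t : size t = B by rewrite -size_alist -ct size_map.
pose x0 : trip k := (0, 0, 0).
pose U (i : 'I_n) := if (i < B)%N then (nth x0 t i).1.2 else 0.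
pose T (i : 'I_n) := (nth x0 t i).2.
have Mom j : \sum_(i < n | (i < r)%N) a i * U i ^+ d * T i ^+ j = mom d j t.
  rewrite /mom (big_nth x0) size_t big_mkord.
  rewrite (big_ord_widen n (fun i => (nth x0 t i).1.1 * (nth x0 t i).1.2 ^+ d * (nth x0 t i).2 ^+ j) (ltnW Bn)).
  rewrite big_mkcond [RHS]big_mkcond; apply: eq_bigr => i _ /=.
  rewrite /U; case: (ltnP i B) => iB; last first.
    by case: ifP => // _; rewrite expr0n gtn_eqF // mulr0 mul0r.
  have -> : (i < r)%N by lia.
  congr (_ * _ * _); have := congr1 (fun s => nth 0 s i) ct.
  by rewrite nth_alist // /coefs (nth_map x0) ?size_t // => ->.
have Ui0 : U i0 = 0 by rewrite /U /=; case: ifP => //; lia.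
have ai0 : a i0 != 0 by apply: anz => /=; lia.
have i0r : (i0 < r)%N by rewrite /=; lia.
have keysum c1 c2 e : (forall i, U i * (c1 * T i + c2) = 0) ->
    c1 * mom d e.+1 t + c2 * mom d e t = 0.
  move=> h; rewrite -!Mom !mulr_sumr -big_split /= big1 // => i _.
  transitivity (a i * U i ^+ d.-1 * T i ^+ e * (U i * (c1 * T i + c2))).
    by rewrite -[in LHS](prednK hd) !exprS; ring.
  by rewrite h mulr0.
have dnz : d%:R != 0 :> k by rewrite -(prednK hd) char_nz.
case: (boolP (d == 1%N)) => [/eqP d1 | dn1].
  have m01 : m0 = 1%N by rewrite /m0 d1.
  rewrite m01 in tz tnz.
  have M0 : mom d 0 t = 0 by apply: tz.
  apply: (@finish k n r d A a i0 U (fun i => T i / mom d 1 t) (fun _ => 1) f) => //.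
  - by move=> j; rewrite d1.
  - rewrite (eq_bigr (fun i => (a i * U i ^+ d * T i ^+ 1) / mom d 1 t)).
      by rewrite -mulr_suml Mom mulfV // d1.
    by move=> i _; rewrite d1 /= subn0 !expr1 expr0 mulr1 mulrA.
  move=> v0 v1 h.
  have h' i : U i * (v0 / mom d 1 t * T i + v1) = 0.
    by rewrite -[RHS](h i); congr (_ * _); ring.
  have e0 := keysum _ _ 0%N h'; rewrite M0 mulr0 addr0 divfK // in e0.
  split => //; have := keysum _ _ 1%N h'; rewrite e0 !mul0r add0r => /eqP.
  by rewrite mulf_eq0 (negbTE tnz) orbF => /eqP.
have m0d : m0 = d.-1 by rewrite /m0 (negbTE dn1).
rewrite m0d in tz tnz.
have d2 : (1 < d)%N by lia.
pose al := (d%:R * mom d d.-1 t)^-1.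
have aln : al != 0 by rewrite invr_eq0 mulf_neq0.
apply: (@finish k n r d A a i0 U (fun _ => al) T f) => //.
- move=> j jd; rewrite (eq_bigr (fun i => al ^+ (d - j) * (a i * U i ^+ d * T i ^+ j))).
    by rewrite -mulr_sumr Mom tz // mulr0.
  by move=> i _; ring.
- have -> : (d - d.-1)%N = 1%N by lia.
  rewrite (eq_bigr (fun i => al * (a i * U i ^+ d * T i ^+ d.-1))).
    rewrite -mulr_sumr Mom -mulr_natr.
    have -> : al * mom d d.-1 t * d%:R = al * (d%:R * mom d d.-1 t) by ring.
    by rewrite mulVf // mulf_neq0.
  by move=> i _; rewrite expr1; ring.
move=> v0 v1 h.
have h' i : U i * (v1 * T i + v0 * al) = 0 by rewrite addrC h.
have e1 := keysum _ _ d.-2 h'.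
rewrite (tz d.-2) ?mulr0 ?addr0 in e1; last by lia.
have dd : d.-2.+1 = d.-1 by lia.
rewrite dd in e1.
have v10 : v1 = 0 by move/eqP: e1; rewrite mulf_eq0 (negbTE tnz) orbF => /eqP.
split => //.
have := keysum _ _ d.-1 h'; rewrite v10 mul0r add0r => /eqP.
by rewrite !mulf_eq0 (negbTE tnz) (negbTE aln) !orbF => /eqP.
Qed.
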